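(* Let $\xi$ be any boundary condition, $\sigma\in\Omega^\xi$ and $x\in\Lambda$. Then: (i) $|\tau^{-1}(\sigma,x)|\in\{1,2\}$; (ii) if $\tau^{-1}(\sigma,x)=\{y_1,y_2\}$ with $y_1\neq y_2$, then $x$ is a leaf of both $\tau(\sigma,y_1)$ and $\tau(\sigma,y_2)$; (iii) if $x\in F_{\mathrm{inc}}(\sigma)$ then $|\tau^{-1}(\sigma,x)|=2$; (iv) if $\sigma_x$ is the longest edge of some triangle of $\sigma$, then $|\tau^{-1}(\sigma,x)|=1$.
   Context: Let $P$ be a lattice polygon (a simple polygon whose vertices lie in $\mathbb{Z}^2$ and whose sides contain no points of $\mathbb{Z}^2$ other than their endpoints) and let $\Lambda^0$ be the set of points of $\mathbb{Z}^2$ in $P$ (including its boundary). Edges are open straight line segments with endpoints in $\Lambda^0$; $|e|$ denotes the $\ell_1$ length of an edge $e$. A triangulation of $\Lambda^0$ is a maximal collection of pairwise disjoint edges none of which contains a point of $\Lambda^0$; all its triangles have area $1/2$, and the set $\Lambda$ of midpoints of its edges does not depend on the triangulation, so a triangulation $\sigma$ is written $\sigma=\{\sigma_x\}_{x\in\Lambda}$ with $\sigma_x$ the edge of midpoint $x$. A boundary condition $\xi$ is a set of pairwise disjoint edges containing no point of $\Lambda^0$ and containing all sides of $P$; $\Omega^\xi$ is the set of triangulations containing every edge of $\xi$. An edge $\sigma_x$ of $\sigma\in\Omega^\xi$ is flippable if $\sigma_x\notin\xi$ and the two triangles of $\sigma$ containing it form a strictly convex quadrilateral; flipping it replaces $\sigma_x$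 by the other diagonal. In each triangle of a triangulation there is a unique longest edge (in $\ell_1$ length). A unit diagonal is a diagonal of a unit square of $\mathbb{Z}^2$. $F_{\mathrm{inc}}(\sigma)$ is the set of $x$ such that $\sigma_x$ is flippable and flipping it yields a strictly longer edge. $F_{\mathrm{dec}}(\sigma)$ is the set of $x\in\Lambda$ such that $\sigma_x$ is not a unit diagonal and is the longest edge of every triangle of $\sigma$ containing it; $F_{\mathrm{diag}}(\sigma)$ is the set of $x$ such that $\sigma_x$ is a unit diagonal and is the longest edge of every triangle of $\sigma$ containing it. Tree of influence: for $x\in F_{\mathrm{dec}}(\sigma)\cup F_{\mathrm{diag}}(\sigma)$ and a triangle $\Delta$ of $\sigma$ containing $\sigma_x$, the rooted structure $\tau^\Delta(\sigma,x)$ on midpoints is built as follows: its root is $x$ and the children of $x$ are the midpoints of the other two edges of $\Delta$; inductively, for a vertex $y$ with parent $z$, let $\Delta'$ be the triangle of $\sigma$ containing $\sigma_y$ but not $\sigma_z$; if $\Delta'$ exists and $\sigma_y$ is its longest edge, the children of $y$ are the midpoints of the two other edges of $\Delta'$, otherwise $y$ has no children. $\tau(\sigma,x)$ is the union over the (one or two) triangles $\Delta$ containing $\sigma_x$ of $\tau^\Delta(\sigma,x)$, rooted at $x$ (it is a tree). For $x\in\Lambda$, $\tau^{-1}(\sigma,x)=\{z\in F_{\mathrm{dec}}(\sigma)\cup F_{\mathrm{diag}}(\sigma): x\in\tau(\sigma,z)\}$. *)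

(* Defs.v *)
From Stdlib Require Import ZArith Reals List Arith.
Import ListNotations.

Definition lpt := (Z * Z)%type.
Definition rpt := (R * R)%type.

Definition toR (p : lpt) : rpt := (IZR (fst p), IZR (snd p)).

Definition on_open_seg (p q z : rpt) : Prop :=
  exists t : R, (0 < t < 1)%R /\
    z = (fst p + t * (fst q - fst p), snd p + t * (snd q - snd p))%R.

Definition on_closed_seg (p q z : rpt) : Prop :=
  exists t : R, (0 <= t <= 1)%R /\
    z = (fst p + t * (fst q - fst p), snd p + t * (snd q - snd p))%R.

(** Polygon given by its cyclic list of vertices vs; side i joins
    vertex i and vertex (i+1 mod n). *)
Definition vertex (vs : list lpt) (i : nat) : lpt := nth i vs (0%Z, 0%Z).
Definition nxt (vs : list lpt) (i : nat) : nat := ((i + 1) mod (length vs))%nat.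

Definition side_seg (vs : list lpt) (i : nat) (z : rpt) : Prop :=
  on_closed_seg (toR (vertex vs i)) (toR (vertex vs (nxt vs i))) z.

Definition simple_polygon (vs : list lpt) : Prop :=
  (3 <= length vs)%nat /\ NoDup vs /\
  forall (i j : nat) (z : rpt), (i < length vs)%nat -> (j < length vs)%nat -> i <> j ->
    side_seg vs i z -> side_seg vs j z ->
    (j = nxt vs i /\ z = toR (vertex vs j)) \/ (i = nxt vs j /\ z = toR (vertex vs i)).

Definition lattice_polygon (vs : list lpt) : Prop :=
  simple_polygon vs /\
  forall (i : nat) (r : lpt), (i < length vs)%nat ->
    ~ on_open_seg (toR (vertex vs i)) (toR (vertex vs (nxt vs i))) (toR r).

(** Closed region bounded by the polygon: boundary, or odd crossing number
    of the horizontal ray to the right (half-open rule). *)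
Definition Rltb (a b : R) : bool := if Rlt_dec a b then true else false.
Definition Rleb (a b : R) : bool := if Rle_dec a b then true else false.

Definition crossb (a b z : rpt) : bool :=
  let '(ax, ay) := a in let '(bx, by_) := b in let '(zx, zy) := z in
  ((Rleb ay zy && Rltb zy by_) || (Rleb by_ zy && Rltb zy ay)) &&
  Rltb zx (ax + (zy - ay) * (bx - ax) / (by_ - ay))%R.

Definition crossing_number (vs : list lpt) (z : rpt) : nat :=
  length (filter (fun i => crossb (toR (vertex vs i)) (toR (vertex vs (nxt vs i))) z)
                 (seq 0 (length vs))).

Definition in_polygon (vs : list lpt) (z : rpt) : Prop :=
  (exists i, (i < length vs)%nat /\ side_seg vs i z) \/
  Nat.odd (crossing_number vs z) = true.

Definition Lambda0 (vs : list lpt) (r : lpt) : Prop := in_polygon vs (toR r).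

Definition edge (vs : list lpt) (p q : lpt) : Prop :=
  p <> q /\ Lambda0 vs p /\ Lambda0 vs q /\
  (forall r, Lambda0 vs r -> ~ on_open_seg (toR p) (toR q) (toR r)) /\
  (forall z, on_open_seg (toR p) (toR q) z -> in_polygon vs z).

Definition disjoint_edges (p q p' q' : lpt) : Prop :=
  ~ exists z, on_open_seg (toR p) (toR q) z /\ on_open_seg (toR p') (toR q') z.

Definition same_edge (p q p' q' : lpt) : Prop :=
  (p = p' /\ q = q') \/ (p = q' /\ q = p').

(** Sets of (unordered) edges: a predicate on ordered pairs, read up to swap. *)
Definition eset := lpt -> lpt -> Prop.
Definition inE (S : eset) (p q : lpt) : Prop := S p q \/ S q p.

Definition pairwise_disjoint (S : eset) : Prop :=
  forall p q p' q', inE S p q -> inE S p' q' -> ~ same_edge p q p' q' ->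
    disjoint_edges p q p' q'.

Definition triangulation (vs : list lpt) (sigma : eset) : Prop :=
  (forall p q, inE sigma p q -> edge vs p q) /\
  pairwise_disjoint sigma /\
  (forall p q, edge vs p q -> ~ inE sigma p q ->
     exists p' q', inE sigma p' q' /\ ~ disjoint_edges p q p' q').

Definition boundary_condition (vs : list lpt) (xi : eset) : Prop :=
  (forall p q, inE xi p q -> edge vs p q) /\
  pairwise_disjoint xi /\
  (forall i, (i < length vs)%nat -> inE xi (vertex vs i) (vertex vs (nxt vs i))).

Definition Omega (vs : list lpt) (xi sigma : eset) : Prop :=
  triangulation vs sigma /\ (forall p q, inE xi p q -> inE sigma p q).

(** Midpoints are represented with DOUBLED coordinates: mid p q = p + q. *)
Definition mid (p q : lpt) : lpt := (fst p + fst q, snd p + snd q)%Z.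

Definition Lambda (sigma : eset) (x : lpt) : Prop :=
  exists p q, inE sigma p q /\ mid p q = x.

Definition len (p q : lpt) : Z := (Z.abs (fst p - fst q) + Z.abs (snd p - snd q))%Z.

Definition det3 (a b c : lpt) : Z :=
  ((fst b - fst a) * (snd c - snd a) - (snd b - snd a) * (fst c - fst a))%Z.

(** (a,b,c) is a triangle of sigma (all triangles have area 1/2). *)
Definition tri_of (sigma : eset) (a b c : lpt) : Prop :=
  inE sigma a b /\ inE sigma b c /\ inE sigma c a /\ Z.abs (det3 a b c) = 1%Z.

Definition unit_diag_at (sigma : eset) (x : lpt) : Prop :=
  exists p q, inE sigma p q /\ mid p q = x /\
    Z.abs (fst p - fst q) = 1%Z /\ Z.abs (snd p - snd q) = 1%Z.

Definition longest_everywhere (sigma : eset) (x : lpt) : Prop :=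
  forall a b c, tri_of sigma a b c -> mid a b = x ->
    (len a b > len b c)%Z /\ (len a b > len c a)%Z.

Definition Fdec (sigma : eset) (x : lpt) : Prop :=
  Lambda sigma x /\ ~ unit_diag_at sigma x /\ longest_everywhere sigma x.

Definition Fdiag (sigma : eset) (x : lpt) : Prop :=
  Lambda sigma x /\ unit_diag_at sigma x /\ longest_everywhere sigma x.

Definition strictly_convex_quad (a b c d : lpt) : Prop :=
  ((det3 a b c > 0 /\ det3 b c d > 0 /\ det3 c d a > 0 /\ det3 d a b > 0)%Z) \/
  ((det3 a b c < 0 /\ det3 b c d < 0 /\ det3 c d a < 0 /\ det3 d a b < 0)%Z).

(** F_inc: sigma_x = ab is flippable (not in xi, its two triangles abc, abd
    form a strictly convex quadrilateral a c b d) and the flip cd is longer. *)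
Definition Finc (xi sigma : eset) (x : lpt) : Prop :=
  exists a b c d, inE sigma a b /\ mid a b = x /\ ~ inE xi a b /\
    tri_of sigma a b c /\ tri_of sigma a b d /\ c <> d /\
    strictly_convex_quad a c b d /\ (len c d > len a b)%Z.

(** Tree of influence tau(sigma, r): tnode sigma r y z means that y is a
    non-root vertex of tau(sigma, r) with parent z. *)
Inductive tnode (sigma : eset) (r : lpt) : lpt -> lpt -> Prop :=
| tn_root : forall a b c w,
    tri_of sigma a b c -> mid a b = r ->
    (w = mid b c \/ w = mid c a) -> tnode sigma r w r
| tn_step : forall y z a b c w,
    tnode sigma r y z ->
    tri_of sigma a b c -> mid a b = y ->
    ~ (z = mid a b \/ z = mid b c \/ z = mid c a) ->
    (len a b > len b c)%Z -> (len a b > len c a)%Z ->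
    (w = mid b c \/ w = mid c a) -> tnode sigma r w y.

Definition in_tau (sigma : eset) (r y : lpt) : Prop :=
  y = r \/ exists z, tnode sigma r y z.

Definition is_leaf (sigma : eset) (r y : lpt) : Prop :=
  in_tau sigma r y /\ ~ exists w, tnode sigma r w y.

Definition tau_inv (sigma : eset) (x : lpt) (z : lpt) : Prop :=
  (Fdec sigma z \/ Fdiag sigma z) /\ in_tau sigma z x.

Definition card1 (S : lpt -> Prop) : Prop := exists y, forall z, S z <-> z = y.
Definition card2 (S : lpt -> Prop) : Prop :=
  exists y1 y2, y1 <> y2 /\ forall z, S z <-> z = y1 \/ z = y2.

(* Main.v *)
Require Import Defs.
From Stdlib Require Import ZArith Reals Lra Lia List Classical Bool Psatz.
Import ListNotations.

Open Scope Z_scope.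

Definition inbox (a b p : lpt) : Prop :=
  (fst a <= fst p <= fst b \/ fst b <= fst p <= fst a) /\
  (snd a <= snd p <= snd b \/ snd b <= snd p <= snd a).

Definition R3 (e1 e2 o p : lpt) : Prop :=
  inbox e1 e2 p /\ det3 e1 e2 p * det3 e1 e2 o <= 0.

Ltac sg x := let H := fresh in destruct (Z.lt_trichotomy x 0) as [H|[H|H]].

Lemma Q3 (y0 y1 z0 z1 : Z) :
  Z.abs (y0*z1 - y1*z0) = 1 ->
  (y0*z0 >= 0 /\ y1*z1 >= 0) \/ ((y0+z0)*z0 <= 0 /\ (y1+z1)*z1 <= 0) \/ ((y0+z0)*y0 <= 0 /\ (y1+z1)*y1 <= 0).
Proof.
  intros H. assert (Hd : y0*z1 - y1*z0 = 1 \/ y0*z1 - y1*z0 = -1) by lia. clear H.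
  sg y0; sg y1; sg z0; sg z1;
  first [ left; split; nia | right; left; split; nia | right; right; split; nia
        | sg (y0+z0); sg (y1+z1);
          first [ left; split; nia | right; left; split; nia | right; right; split; nia ] ].
Qed.

Lemma abs_add_same (p q : Z) : p*q >= 0 -> Z.abs (p+q) = Z.abs p + Z.abs q.
Proof. intros. sg p; sg q; try nia; repeat rewrite Z.abs_neq by lia; repeat rewrite Z.abs_eq by lia; lia. Qed.

Lemma sum_ge1 x y : x <> 0 \/ y <> 0 -> Z.abs x + Z.abs y >= 1.
Proof. intros. destruct (Z.abs_spec x) as [[? E]|[? E]]; rewrite E; destruct (Z.abs_spec y) as [[? F]|[? F]]; rewrite F; lia. Qed.

Ltac gen_abs := repeat match goal with
  | H : context [Z.abs ?x] |- _ => let a := fresh "A" in set (a := Z.abs x) in *; clearbody a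
  | |- context [Z.abs ?x] => let a := fresh "A" in set (a := Z.abs x) in *; clearbody a
  end.

Lemma LU (a b c : lpt) : Z.abs (det3 a b c) = 1 ->
  (len a b > len b c /\ len a b > len c a) \/
  (len b c > len c a /\ len b c > len a b) \/
  (len c a > len a b /\ len c a > len b c).
Proof.
  destruct a as [a0 a1], b as [b0 b1], c as [c0 c1]; unfold det3, len; simpl. intros H.
  assert (Hd : Z.abs ((b0-a0)*(c1-b1) - (b1-a1)*(c0-b0)) = 1) by (rewrite <- H; f_equal; ring).
  assert (Hu : Z.abs (b0-a0) + Z.abs (b1-a1) >= 1).
  { apply sum_ge1. destruct (Z.eq_dec (b0-a0) 0) as [e|e]; auto. destruct (Z.eq_dec (b1-a1) 0) as [e0|e0]; auto.
    exfalso. rewrite e, e0 in Hd. simpl in Hd. discriminate. }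
  assert (Hv : Z.abs (c0-b0) + Z.abs (c1-b1) >= 1).
  { apply sum_ge1. destruct (Z.eq_dec (c0-b0) 0) as [e|e]; auto. destruct (Z.eq_dec (c1-b1) 0) as [e0|e0]; auto.
    exfalso. rewrite e, e0, !Z.mul_0_r in Hd. simpl in Hd. discriminate. }
  assert (Hw : Z.abs (a0-c0) + Z.abs (a1-c1) >= 1).
  { apply sum_ge1. destruct (Z.eq_dec (a0-c0) 0) as [e|e]; auto. destruct (Z.eq_dec (a1-c1) 0) as [e0|e0]; auto.
    exfalso. assert (c0 = a0) by lia. assert (c1 = a1) by lia.
    assert (X : (b0-a0)*(c1-b1) - (b1-a1)*(c0-b0) = 0) by (subst; ring). rewrite X in Hd. simpl in Hd. discriminate. }
  clear H.
  assert (S1 : Z.abs (a0-b0) = Z.abs (b0-a0)) by (replace (a0-b0) with (-(b0-a0)) by ring; apply Z.abs_opp).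
  assert (S2 : Z.abs (a1-b1) = Z.abs (b1-a1)) by (replace (a1-b1) with (-(b1-a1)) by ring; apply Z.abs_opp).
  assert (S3 : Z.abs (b0-c0) = Z.abs (c0-b0)) by (replace (b0-c0) with (-(c0-b0)) by ring; apply Z.abs_opp).
  assert (S4 : Z.abs (b1-c1) = Z.abs (c1-b1)) by (replace (b1-c1) with (-(c1-b1)) by ring; apply Z.abs_opp).
  assert (S5 : Z.abs (c0-a0) = Z.abs (a0-c0)) by (replace (c0-a0) with (-(a0-c0)) by ring; apply Z.abs_opp).
  assert (S6 : Z.abs (c1-a1) = Z.abs (a1-c1)) by (replace (c1-a1) with (-(a1-c1)) by ring; apply Z.abs_opp).
  rewrite S1, S2, S3, S4, S5, S6.
  destruct (Q3 _ _ _ _ Hd) as [[H1 H2]|[[H1 H2]|[H1 H2]]].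
  - assert (E0 : Z.abs (a0-c0) = Z.abs (b0-a0) + Z.abs (c0-b0)).
    { replace (a0-c0) with (-((b0-a0)+(c0-b0))) by ring. rewrite Z.abs_opp. apply abs_add_same. clear - H1 H2; nia. }
    assert (E1 : Z.abs (a1-c1) = Z.abs (b1-a1) + Z.abs (c1-b1)).
    { replace (a1-c1) with (-((b1-a1)+(c1-b1))) by ring. rewrite Z.abs_opp. apply abs_add_same. clear - H1 H2; nia. }
    clear Hd H1 H2; gen_abs; lia.
  - assert (E0 : Z.abs (b0-a0) = Z.abs (c0-b0) + Z.abs (a0-c0)).
    { replace (b0-a0) with (-((c0-b0)+(a0-c0))) by ring. rewrite Z.abs_opp. apply abs_add_same. clear - H1 H2; nia. }
    assert (E1 : Z.abs (b1-a1) = Z.abs (c1-b1) + Z.abs (a1-c1)).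
    { replace (b1-a1) with (-((c1-b1)+(a1-c1))) by ring. rewrite Z.abs_opp. apply abs_add_same. clear - H1 H2; nia. }
    clear Hd H1 H2; gen_abs; lia.
  - assert (E0 : Z.abs (c0-b0) = Z.abs (b0-a0) + Z.abs (a0-c0)).
    { replace (c0-b0) with (-((b0-a0)+(a0-c0))) by ring. rewrite Z.abs_opp. apply abs_add_same. clear - H1 H2; nia. }
    assert (E1 : Z.abs (c1-b1) = Z.abs (b1-a1) + Z.abs (a1-c1)).
    { replace (c1-b1) with (-((b1-a1)+(a1-c1))) by ring. rewrite Z.abs_opp. apply abs_add_same. clear - H1 H2; nia. }
    clear Hd H1 H2; gen_abs; lia.
Qed.

Ltac absc x := let H := fresh in let E := fresh in destruct (Z.abs_spec x) as [[H E]|[H E]]; rewrite E in *.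

Lemma LQ0 (u0 u1 v0 v1 : Z) :
  Z.abs (u0*v1 - u1*v0) = 1 ->
  Z.abs u0 + Z.abs u1 > Z.abs v0 + Z.abs v1 ->
  Z.abs u0 + Z.abs u1 > Z.abs (u0-v0) + Z.abs (u1-v1) ->
  ((0 <= v0 <= u0) \/ (u0 <= v0 <= 0)) /\ ((0 <= v1 <= u1) \/ (u1 <= v1 <= 0)).
Proof.
  intros H1 H2 H3.
  absc u0; absc u1; absc v0; absc v1; absc (u0-v0); absc (u1-v1); absc (u0*v1-u1*v0); nia.
Qed.

Lemma KI0 (U0 U1 V0 V1 E0 E1 : Z) :
  Z.abs (V0*U1 - V1*U0) = 1 ->
  ((0 <= V0 <= U0) \/ (U0 <= V0 <= 0)) -> ((0 <= V1 <= U1) \/ (U1 <= V1 <= 0)) ->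
  ((0 <= E0 <= V0) \/ (V0 <= E0 <= 0)) -> ((0 <= E1 <= V1) \/ (V1 <= E1 <= 0)) ->
  (V0*E1 - V1*E0) * (V0*U1 - V1*U0) <= 0 ->
  (E0*U1 - E1*U0) * (V0*U1 - V1*U0) >= 0.
Proof.
  intros HD h1 h2 h3 h4 H.
  set (D := V0*U1 - V1*U0) in *.
  assert (HD2 : D*D = 1) by (absc D; nia).
  set (al := D * (V0*E1 - V1*E0)). set (be := D * (E0*U1 - E1*U0)).
  assert (I0 : E0 = be * V0 + al * U0) by (subst al be D; nia).
  assert (I1 : E1 = be * V1 + al * U1) by (subst al be D; nia).
  assert (Hal : al <= 0) by (subst al; nia).
  destruct (Z_lt_le_dec be 0) as [Hb|Hb].
  - exfalso.
    assert (V0 = 0) by (destruct h1; destruct h3; nia).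
    assert (V1 = 0) by (destruct h2; destruct h4; nia).
    subst D. rewrite H0, H1 in HD. simpl in HD. lia.
  - subst be. nia.
Qed.

Lemma B4_0 (U0 U1 V0 V1 E0 E1 : Z) :
  Z.abs (U0*V1 - U1*V0) = 1 ->
  ((0 <= E0 <= U0) \/ (U0 <= E0 <= 0)) -> ((0 <= E1 <= U1) \/ (U1 <= E1 <= 0)) ->
  U0*E1 - U1*E0 = 0 ->
  (E0 = 0 /\ E1 = 0) \/ (E0 = U0 /\ E1 = U1).
Proof.
  intros HD h1 h2 H.
  set (D := U0*V1 - U1*V0) in *.
  assert (HD2 : D*D = 1) by (absc D; nia).
  set (k := D * (E0*V1 - E1*V0)).
  assert (A0 : D*E0 = (E0*V1-E1*V0)*U0 + V0*(U0*E1-U1*E0)) by (subst D; ring).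
  assert (A1 : D*E1 = (E0*V1-E1*V0)*U1 + V1*(U0*E1-U1*E0)) by (subst D; ring).
  rewrite H, Z.mul_0_r, Z.add_0_r in A0, A1.
  assert (I0 : E0 = k * U0).
  { replace E0 with (D*(D*E0)) by (rewrite Z.mul_assoc, HD2; ring). rewrite A0. subst k. ring. }
  assert (I1 : E1 = k * U1).
  { replace E1 with (D*(D*E1)) by (rewrite Z.mul_assoc, HD2; ring). rewrite A1. subst k. ring. }
  assert (HU : U0 <> 0 \/ U1 <> 0).
  { destruct (Z.eq_dec U0 0); destruct (Z.eq_dec U1 0); try tauto. subst D. rewrite e, e0 in HD. simpl in HD. lia. }
  assert (Hk : 0 <= k <= 1).
  { destruct HU as [HU|HU]; [destruct h1|destruct h2]; nia. }
  assert (k = 0 \/ k = 1) as [K|K] by lia; rewrite K in I0, I1; lia.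
Qed.

Lemma B6_0 (u0 u1 v0 v1 w0 w1 : Z) :
  Z.abs (u0*v1 - u1*v0) = 1 -> Z.abs (u0*w1 - u1*w0) = 1 ->
  ((0 <= v0 <= u0) \/ (u0 <= v0 <= 0)) -> ((0 <= v1 <= u1) \/ (u1 <= v1 <= 0)) ->
  let c1 := v0*u1 - v1*u0 in
  let c2 := (u0-v0)*(w1-v1) - (u1-v1)*(w0-v0) in
  let c3 := (w0-u0)*(-u1) - (w1-u1)*(-u0) in
  let c4 := (-w0)*(v1-w1) - (-w1)*(v0-w0) in
  (c1 > 0 /\ c2 > 0 /\ c3 > 0 /\ c4 > 0) \/ (c1 < 0 /\ c2 < 0 /\ c3 < 0 /\ c4 < 0) ->
  Z.abs (w0-v0) + Z.abs (w1-v1) <= Z.abs u0 + Z.abs u1.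
Proof.
  intros HD HW h1 h2 c1 c2 c3 c4 HC.
  set (D := u0*v1 - u1*v0) in *.
  assert (HD2 : D*D = 1) by (absc D; nia).
  assert (Ew : u0*w1 - u1*w0 = -D).
  { assert (c1 = -D) by (subst c1 D; ring). assert (c3 = u0*w1 - u1*w0) by (subst c3; ring).
    absc (u0*w1 - u1*w0); absc D; lia. }
  set (e0 := w0 - u0 + v0). set (e1 := w1 - u1 + v1).
  assert (De : u0*e1 - u1*e0 = 0) by (subst e0 e1 D; lia).
  set (k := D * (e0*v1 - e1*v0)).
  assert (A0 : D*e0 = (e0*v1-e1*v0)*u0 + v0*(u0*e1-u1*e0)) by (subst D; ring).
  assert (A1 : D*e1 = (e0*v1-e1*v0)*u1 + v1*(u0*e1-u1*e0)) by (subst D; ring).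
  rewrite De, Z.mul_0_r, Z.add_0_r in A0, A1.
  assert (I0 : e0 = k * u0).
  { replace e0 with (D*(D*e0)) by (rewrite Z.mul_assoc, HD2; ring). rewrite A0. subst k. ring. }
  assert (I1 : e1 = k * u1).
  { replace e1 with (D*(D*e1)) by (rewrite Z.mul_assoc, HD2; ring). rewrite A1. subst k. ring. }
  assert (W0 : w0 = (1+k)*u0 - v0) by (subst e0; lia).
  assert (W1 : w1 = (1+k)*u1 - v1) by (subst e1; lia).
  assert (C1 : c1 = -D) by (subst c1 D; ring).
  assert (C2 : c2 = (k-1)*D) by (subst c2 D; rewrite W0, W1; ring).
  assert (C4 : c4 = -(1+k)*D) by (subst c4 D; rewrite W0, W1; ring).
  rewrite C1, C2, C4 in HC.
  assert (K : k = 0).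
  { clearbody c1 c2 c3 c4 k e0 e1 D. assert (HDD : D = 1 \/ D = -1) by (clear - HD2; nia).
    destruct HDD as [HDD|HDD]; rewrite HDD in HC; lia. }
  rewrite K in W0, W1. rewrite W0, W1.
  replace ((1+0)*u0 - v0 - v0) with (u0 - 2*v0) by ring.
  replace ((1+0)*u1 - v1 - v1) with (u1 - 2*v1) by ring.
  destruct h1; destruct h2; absc u0; absc u1; absc (u0-2*v0); absc (u1-2*v1); lia.
Qed.

Lemma abs_sub_sym (x y : Z) : Z.abs (x - y) = Z.abs (y - x).
Proof. replace (x-y) with (-(y-x)) by ring. apply Z.abs_opp. Qed.

Lemma LQ (a b t : lpt) : Z.abs (det3 a b t) = 1 -> (len a b > len b t)%Z -> (len a b > len t a)%Z -> inbox a b t.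
Proof.
  destruct a as [a0 a1], b as [b0 b1], t as [t0 t1]; unfold det3, len, inbox; simpl. intros H1 H2 H3.
  rewrite (abs_sub_sym a0 b0), (abs_sub_sym a1 b1) in *.
  replace (b0 - t0) with ((b0-a0) - (t0-a0)) in H2 by ring.
  replace (b1 - t1) with ((b1-a1) - (t1-a1)) in H2 by ring.
  destruct (LQ0 (b0-a0) (b1-a1) (t0-a0) (t1-a1) H1 H3 H2). lia.
Qed.

Lemma KIc (a b t p : lpt) : Z.abs (det3 a b t) = 1 -> inbox a b t -> inbox b t p ->
  det3 b t p * det3 b t a <= 0 -> inbox a b p /\ det3 a b p * det3 a b t >= 0.
Proof.
  destruct a as [a0 a1], b as [b0 b1], t as [t0 t1], p as [p0 p1]; unfold det3, inbox; simpl.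
  intros H1 H2 H3 H4. split; [lia|].
  replace ((b0 - a0) * (p1 - a1) - (b1 - a1) * (p0 - a0)) with ((p0-b0)*(a1-b1) - (p1-b1)*(a0-b0)) by ring.
  replace ((b0 - a0) * (t1 - a1) - (b1 - a1) * (t0 - a0)) with ((t0-b0)*(a1-b1) - (t1-b1)*(a0-b0)) by ring.
  replace ((b0 - a0) * (t1 - a1) - (b1 - a1) * (t0 - a0)) with ((t0-b0)*(a1-b1) - (t1-b1)*(a0-b0)) in H1 by ring.
  apply (KI0 (a0-b0) (a1-b1) (t0-b0) (t1-b1) (p0-b0) (p1-b1)); try lia; auto.
Qed.

Lemma B4 (a b t p : lpt) : inbox a b p -> det3 a b p = 0 -> Z.abs (det3 a b t) = 1 -> p = a \/ p = b.
Proof.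
  destruct a as [a0 a1], b as [b0 b1], t as [t0 t1], p as [p0 p1]; unfold det3, inbox; simpl.
  intros H1 H2 H3.
  destruct (B4_0 (b0-a0) (b1-a1) (t0-a0) (t1-a1) (p0-a0) (p1-a1) H3) as [[E0 E1]|[E0 E1]]; try lia.
  - left. f_equal; lia.
  - right. f_equal; lia.
Qed.

Lemma B5 (a b t p : lpt) : inbox a b t -> inbox b t p -> inbox t a p -> p = t.
Proof.
  destruct a as [a0 a1], b as [b0 b1], t as [t0 t1], p as [p0 p1]; unfold inbox; simpl.
  intros. f_equal; lia.
Qed.

Lemma B6 (a b c d : lpt) : Z.abs (det3 a b c) = 1 -> Z.abs (det3 a b d) = 1 ->
  strictly_convex_quad a c b d -> (len c d > len a b)%Z ->
  ~ ((len a b > len b c)%Z /\ (len a b > len c a)%Z).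
Proof.
  intros H1 H2 HC HL [L1 L2].
  pose proof (LQ a b c H1 L1 L2) as HB.
  revert H1 H2 HC HL HB.
  destruct a as [a0 a1], b as [b0 b1], c as [c0 c1], d as [d0 d1]; unfold det3, len, inbox, strictly_convex_quad, det3; simpl.
  intros H1 H2 HC HL HB.
  assert (HB' : ((0 <= c0-a0 <= b0-a0) \/ (b0-a0 <= c0-a0 <= 0)) /\ ((0 <= c1-a1 <= b1-a1) \/ (b1-a1 <= c1-a1 <= 0))) by lia.
  destruct HB' as [h1 h2].
  pose proof (B6_0 (b0-a0) (b1-a1) (c0-a0) (c1-a1) (d0-a0) (d1-a1) H1 H2 h1 h2) as K.
  cbv zeta in K.
  replace ((c0 - a0) * (b1 - a1) - (c1 - a1) * (b0 - a0)) with ((c0 - a0) * (b1 - a1) - (c1 - a1) * (b0 - a0)) in K by ring.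
  replace ((b0 - a0 - (c0 - a0)) * (d1 - a1 - (c1 - a1)) - (b1 - a1 - (c1 - a1)) * (d0 - a0 - (c0 - a0))) with ((b0 - c0) * (d1 - c1) - (b1 - c1) * (d0 - c0)) in K by ring.
  replace ((d0 - a0 - (b0 - a0)) * - (b1 - a1) - (d1 - a1 - (b1 - a1)) * - (b0 - a0)) with ((d0 - b0) * (a1 - b1) - (d1 - b1) * (a0 - b0)) in K by ring.
  replace (- (d0 - a0) * (c1 - a1 - (d1 - a1)) - - (d1 - a1) * (c0 - a0 - (d0 - a0))) with ((a0 - d0) * (c1 - d1) - (a1 - d1) * (c0 - d0)) in K by ring.
  replace (d0 - a0 - (c0 - a0)) with (d0 - c0) in K by ring.
  replace (d1 - a1 - (c1 - a1)) with (d1 - c1) in K by ring.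
  specialize (K HC).
  rewrite (abs_sub_sym c0 d0), (abs_sub_sym c1 d1), (abs_sub_sym a0 b0), (abs_sub_sym a1 b1) in HL.
  lia.
Qed.

Open Scope Z_scope.

Definition MUp (s : eset) := forall a b a' b', inE s a b -> inE s a' b' -> mid a b = mid a' b' -> same_edge a b a' b'.
Definition T2p (s : eset) := forall p q c d, tri_of s p q c -> tri_of s p q d -> det3 p q c = det3 p q d -> c = d.
Definition BNDp (s : eset) := exists B, forall a b, inE s a b -> len a b <= B.
Definition GoodT (s : eset) := MUp s /\ T2p s /\ BNDp s.

Lemma mid_comm a b : mid a b = mid b a.
Proof. unfold mid. f_equal; ring. Qed.
Lemma len_comm a b : len a b = len b a.
Proof. unfold len. rewrite (abs_sub_sym (fst a)), (abs_sub_sym (snd a)). reflexivity. Qed.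
Lemma det3_rot a b c : det3 a b c = det3 b c a.
Proof. unfold det3. ring. Qed.
Lemma det3_sw a b c : det3 a b c = - det3 b a c.
Proof. unfold det3. ring. Qed.
Lemma inE_sym s a b : inE s a b -> inE s b a.
Proof. unfold inE; tauto. Qed.

Lemma tri_rot s a b c : tri_of s a b c -> tri_of s b c a.
Proof. unfold tri_of. intros [? [? [? H]]]. rewrite det3_rot in H. tauto. Qed.
Lemma tri_sw s a b c : tri_of s a b c -> tri_of s b a c.
Proof. unfold tri_of. intros [? [? [? H]]]. rewrite det3_sw, Z.abs_opp in H.
  repeat split; auto using inE_sym. Qed.
Lemma tri_det s a b c : tri_of s a b c -> Z.abs (det3 a b c) = 1.
Proof. unfold tri_of; tauto. Qed.
Lemma tri_ab s a b c : tri_of s a b c -> inE s a b.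
Proof. unfold tri_of; tauto. Qed.
Lemma tri_neq s a b c : tri_of s a b c -> a <> b /\ b <> c /\ c <> a.
Proof.
  intros H. apply tri_det in H.
  repeat split; intro E; subst; revert H; unfold det3;
  match goal with |- context [Z.abs ?e] => replace e with 0 by ring end; simpl; lia.
Qed.

Lemma tri_bc s a b c : tri_of s a b c -> inE s b c.
Proof. intro H. exact (tri_ab _ _ _ _ (tri_rot _ _ _ _ H)). Qed.
Lemma tri_ca s a b c : tri_of s a b c -> inE s c a.
Proof. intro H. exact (tri_bc _ _ _ _ (tri_rot _ _ _ _ H)). Qed.

Lemma align s a b t p q : MUp s -> tri_of s a b t -> inE s p q -> mid a b = mid p q -> tri_of s p q t.
Proof.
  intros MU H Hpq E. destruct (MU a b p q (tri_ab _ _ _ _ H) Hpq E) as [[-> ->]|[-> ->]]; auto.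
  apply tri_sw; auto.
Qed.

Lemma mid_len s a b p q : MUp s -> inE s a b -> inE s p q -> mid a b = mid p q -> len a b = len p q.
Proof.
  intros MU H1 H2 E. destruct (MU a b p q H1 H2 E) as [[-> ->]|[-> ->]]; auto using len_comm.
Qed.

Lemma T2sign s p q c d : T2p s -> tri_of s p q c -> tri_of s p q d -> c <> d -> det3 p q c * det3 p q d < 0.
Proof.
  intros T H1 H2 N. pose proof (tri_det _ _ _ _ H1). pose proof (tri_det _ _ _ _ H2).
  assert (det3 p q c <> det3 p q d) by (intro E; apply N; eapply T; eauto).
  destruct (Z.abs_spec (det3 p q c)) as [[? E1]|[? E1]];
  destruct (Z.abs_spec (det3 p q d)) as [[? E2]|[? E2]]; nia.
Qed.

Lemma pig3 s p q c1 c2 c3 : T2p s -> tri_of s p q c1 -> tri_of s p q c2 -> tri_of s p q c3 ->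
  c1 = c2 \/ c1 = c3 \/ c2 = c3.
Proof.
  intros T H1 H2 H3.
  destruct (classic (c1 = c2)); auto. destruct (classic (c1 = c3)); auto. destruct (classic (c2 = c3)); auto.
  pose proof (T2sign _ _ _ _ _ T H1 H2 H). pose proof (T2sign _ _ _ _ _ T H1 H3 H0).
  pose proof (T2sign _ _ _ _ _ T H2 H3 H4). nia.
Qed.

Definition CHILD (s : eset) (z y a b t : lpt) : Prop :=
  tri_of s a b t /\ mid a b = z /\ len a b > len b t /\ len a b > len t a /\ mid b t = y.

Lemma normalize s a b c z y : tri_of s a b c -> mid a b = z -> len a b > len b c -> len a b > len c a ->
  (y = mid b c \/ y = mid c a) ->
  exists a' b', CHILD s z y a' b' c /\ ((a' = a /\ b' = b) \/ (a' = b /\ b' = a)).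
Proof.
  intros H E L1 L2 [Y|Y].
  - exists a, b. unfold CHILD. auto 10.
  - exists b, a. unfold CHILD. split; [|auto].
    split; [apply tri_sw; auto|]. split; [rewrite mid_comm; auto|].
    split; [rewrite len_comm, (len_comm a c); lia|].
    split; [rewrite len_comm, (len_comm c b); lia|].
    rewrite mid_comm; auto.
Qed.

Lemma L_conf s p q u y z a b t : MUp s -> tri_of s p q u -> mid p q = y -> len p q > len q u -> len p q > len u p ->
  CHILD s z y a b t -> u <> a.
Proof.
  intros MU H E L1 L2 [Ht [Ez [M1 [M2 Ey]]]] Eu.
  assert (E2 : mid b t = mid p q) by congruence.
  destruct (MU b t p q (tri_bc _ _ _ _ Ht) (tri_ab _ _ _ _ H) E2) as [[E3 E4]|[E3 E4]]; subst p q u.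
  - rewrite (len_comm t a) in L1. lia.
  - rewrite (len_comm b a) in L1. rewrite (len_comm t b) in *. lia.
Qed.

Lemma ParentDet s z z' y a b t b' t' : MUp s -> CHILD s z y a b t -> CHILD s z' y a b' t' -> z = z'.
Proof.
  intros MU [H1 [E1 [L1 [L2 Y1]]]] [H2 [E2 [L3 [L4 Y2]]]].
  assert (E : mid b t = mid b' t') by congruence.
  destruct (MU b t b' t' (tri_bc _ _ _ _ H1) (tri_bc _ _ _ _ H2) E) as [[E3 E4]|[E3 E4]]; subst b' t'.
  - congruence.
  - exfalso. rewrite (len_comm b a) in L4. rewrite (len_comm t a) in L2. lia.
Qed.

Lemma child_tri s z y a b t : CHILD s z y a b t -> tri_of s a b t.
Proof. unfold CHILD; tauto. Qed.

Lemma child_align s z y a b t p q : MUp s -> CHILD s z y a b t -> inE s p q -> mid p q = y -> tri_of s p q a.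
Proof.
  intros MU [H [_ [_ [_ Y]]]] Hpq E.
  apply (align s b t a p q MU); auto using tri_rot. congruence.
Qed.

Lemma child_inE s z y a b t : CHILD s z y a b t -> inE s b t /\ mid b t = y.
Proof. intros [H [_ [_ [_ Y]]]]. split; auto. exact (tri_bc _ _ _ _ H). Qed.

Lemma pigC s z1 z2 z3 y a1 b1 t1 a2 b2 t2 a3 b3 t3 : MUp s -> T2p s ->
  CHILD s z1 y a1 b1 t1 -> CHILD s z2 y a2 b2 t2 -> CHILD s z3 y a3 b3 t3 ->
  a1 = a2 \/ a1 = a3 \/ a2 = a3.
Proof.
  intros MU T C1 C2 C3. destruct (child_inE _ _ _ _ _ _ C1) as [I Y].
  apply (pig3 s b1 t1 _ _ _ T); eapply child_align; eauto.
Qed.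

Lemma pigL s p q u z1 z2 y a1 b1 t1 a2 b2 t2 : MUp s -> T2p s ->
  tri_of s p q u -> mid p q = y -> len p q > len q u -> len p q > len u p ->
  CHILD s z1 y a1 b1 t1 -> CHILD s z2 y a2 b2 t2 -> a1 = a2.
Proof.
  intros MU T H E L1 L2 C1 C2.
  pose proof (L_conf _ _ _ _ _ _ _ _ _ MU H E L1 L2 C1).
  pose proof (L_conf _ _ _ _ _ _ _ _ _ MU H E L1 L2 C2).
  destruct (pig3 s p q u a1 a2 T H) as [?|[?|?]]; try congruence;
  eapply child_align; eauto using tri_ab.
Qed.

Open Scope Z_scope.

Lemma W s r y z : longest_everywhere s r -> tnode s r y z -> exists a b t, CHILD s z y a b t.
Proof.
  intros LE H. destruct H as [a b c w H E Y|y z a b c w H1 H E N L1 L2 Y].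
  - destruct (LE a b c H E) as [L1 L2].
    destruct (normalize s a b c r w H E L1 L2 Y) as [a' [b' [C _]]]. eauto.
  - destruct (normalize s a b c y w H E L1 L2 Y) as [a' [b' [C _]]]. eauto.
Qed.

Lemma child_notLE s z x a b t : CHILD s z x a b t -> ~ longest_everywhere s x.
Proof.
  intros [H [E [L1 [L2 Y]]]] LE.
  destruct (LE b t a (tri_rot _ _ _ _ H) Y). lia.
Qed.

Lemma P s r y z : MUp s -> T2p s -> longest_everywhere s r -> tnode s r y z ->
  forall r', longest_everywhere s r' -> tnode s r' y z -> r = r'.
Proof.
  intros MU T LE H. induction H as [a b c w H E Y|y z a b c w H1 IH H E N L1 L2 Y]; intros r' LE' H2.
  - inversion H2; subst.
    + reflexivity.
    + exfalso. destruct (W s r' _ _ LE' H0) as [a1 [b1 [t1 C]]]. eapply child_notLE; eauto.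
  - inversion H2 as [a' b' c' w' H' E' Y'|y' z' a' b' c' w' H1' H' E' N' L1' L2' Y']; subst.
    + exfalso. destruct (W s r _ _ LE H1) as [a1 [b1 [t1 C]]]. eapply child_notLE; eauto.
    + destruct (W s r _ _ LE H1) as [a1 [b1 [t1 C1]]].
      destruct (W s r' _ _ LE' H1') as [a2 [b2 [t2 C2]]].
      assert (a1 = a2) by (eapply (pigL s a b c); eauto).
      subst a2. assert (z = z') by (eapply ParentDet; eauto). subst z'.
      apply IH; auto.
Qed.

Definition Root (s : eset) (r : lpt) := Fdec s r \/ Fdiag s r.

Lemma root_LE s r : Root s r -> longest_everywhere s r.
Proof. unfold Root, Fdec, Fdiag; tauto. Qed.
Lemma root_of s r : Lambda s r -> longest_everywhere s r -> Root s r.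
Proof. intros. unfold Root, Fdec, Fdiag. destruct (classic (unit_diag_at s r)); tauto. Qed.

Lemma in_tau_cases s r x : Root s r -> in_tau s r x -> x = r \/ exists z a b t, tnode s r x z /\ CHILD s z x a b t.
Proof.
  intros R [E|[z H]]; auto. right. destruct (W s r x z (root_LE _ _ R) H) as [a [b [t C]]]. eauto 10.
Qed.

Lemma rootx s r r' x : Root s r -> Root s r' -> in_tau s r x -> in_tau s r' x -> x = r -> r' = r.
Proof.
  intros R R' H H' ->. destruct (in_tau_cases s r' r R' H') as [?|[z [a [b [t [_ C]]]]]]; auto.
  exfalso. apply (child_notLE _ _ _ _ _ _ C). apply root_LE; auto.
Qed.

Lemma Cnt3 s x r1 r2 r3 : MUp s -> T2p s -> tau_inv s x r1 -> tau_inv s x r2 -> tau_inv s x r3 ->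
  r1 = r2 \/ r1 = r3 \/ r2 = r3.
Proof.
  intros MU T [R1 H1] [R2 H2] [R3 H3].
  destruct (classic (x = r1)) as [E|E].
  { left. symmetry. eapply rootx; eauto. }
  destruct (classic (x = r2)) as [E2|E2].
  { left. eapply rootx; eauto. }
  destruct (classic (x = r3)) as [E3|E3].
  { right; left. eapply rootx; eauto. }
  destruct (in_tau_cases s r1 x R1 H1) as [?|[z1 [a1 [b1 [t1 [N1 C1]]]]]]; [congruence|].
  destruct (in_tau_cases s r2 x R2 H2) as [?|[z2 [a2 [b2 [t2 [N2 C2]]]]]]; [congruence|].
  destruct (in_tau_cases s r3 x R3 H3) as [?|[z3 [a3 [b3 [t3 [N3 C3]]]]]]; [congruence|].
  destruct (pigC s z1 z2 z3 x a1 b1 t1 a2 b2 t2 a3 b3 t3 MU T C1 C2 C3) as [Q|[Q|Q]]; subst.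
  - left. assert (z1 = z2) by (eapply ParentDet; eauto). subst. eapply P; eauto using root_LE.
  - right; left. assert (z1 = z3) by (eapply ParentDet; eauto). subst. eapply P; eauto using root_LE.
  - right; right. assert (z2 = z3) by (eapply ParentDet; eauto). subst. eapply P; eauto using root_LE.
Qed.

Open Scope Z_scope.

Lemma notLE_child s z : ~ longest_everywhere s z -> exists z2 a b t, CHILD s z2 z a b t.
Proof.
  intros N. unfold longest_everywhere in N.
  apply not_all_ex_not in N as [a N]. apply not_all_ex_not in N as [b N]. apply not_all_ex_not in N as [c N].
  apply imply_to_and in N as [H N]. apply imply_to_and in N as [E N].
  destruct (LU a b c (tri_det _ _ _ _ H)) as [L|[[L1 L2]|[L1 L2]]].
  - tauto.
  -
    destruct (normalize s b c a (mid b c) z (tri_rot _ _ _ _ H) eq_refl L1 L2 (or_intror (eq_sym E))) as [a' [b' [C _]]].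
    eauto.
  - destruct (normalize s c a b (mid c a) z (tri_rot _ _ _ _ (tri_rot _ _ _ _ H)) eq_refl L1 L2 (or_introl (eq_sym E))) as [a' [b' [C _]]].
    eauto.
Qed.

Lemma Climb s B : MUp s -> T2p s -> (forall a b, inE s a b -> len a b <= B) ->
  forall n z y a b t, (Z.to_nat (B - len a b) < n)%nat -> CHILD s z y a b t ->
  exists r, Root s r /\ tnode s r y z.
Proof.
  intros MU T HB n. induction n as [|n IH]; intros z y a b t Hn C; [lia|].
  destruct (classic (longest_everywhere s z)) as [LE|NLE].
  - exists z. destruct C as [H [E [L1 [L2 Y]]]]. split.
    + apply root_of; auto. exists a, b. split; auto. exact (tri_ab _ _ _ _ H).
    + apply (tn_root s z a b t y H E). auto.
  - destruct (notLE_child s z NLE) as [z2 [a2 [b2 [t2 C2]]]].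
    pose proof C as C'. pose proof C2 as C2'.
    destruct C as [H [E [L1 [L2 Y]]]]. destruct C2 as [H2 [E2 [L3 [L4 Y2]]]].
    assert (EL : len b2 t2 = len a b) by (apply (mid_len s); eauto using tri_bc, tri_ab; congruence).
    assert (Hb := HB a2 b2 (tri_ab _ _ _ _ H2)).
    destruct (IH z2 z a2 b2 t2 ltac:(lia) C2') as [r [R N]].
    exists r. split; auto.
    apply (tn_step s r z z2 a b t y N H E); auto.
    destruct (tri_neq _ _ _ _ H) as [D1 [D2 D3]].
    destruct (MU b2 t2 a b (tri_bc _ _ _ _ H2) (tri_ab _ _ _ _ H) ltac:(congruence)) as [[F1 F2]|[F1 F2]]; subst b2 t2;
    intros [Q|[Q|Q]].
    + assert (len a2 a = len a b) by (apply (mid_len s); eauto using tri_ab; congruence). lia.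
    + destruct (MU a2 a b t (tri_ab _ _ _ _ H2) (tri_bc _ _ _ _ H) ltac:(congruence)) as [[G1 G2]|[G1 G2]]; subst; try congruence.
    + destruct (MU a2 a t a (tri_ab _ _ _ _ H2) (tri_ca _ _ _ _ H) ltac:(congruence)) as [[G1 G2]|[G1 G2]]; subst; try congruence.
      rewrite len_comm in L4. lia.
    + assert (len a2 b = len a b) by (apply (mid_len s); eauto using tri_ab; congruence). lia.
    + destruct (MU a2 b b t (tri_ab _ _ _ _ H2) (tri_bc _ _ _ _ H) ltac:(congruence)) as [[G1 G2]|[G1 G2]]; subst; try congruence.
      rewrite (len_comm b a), (len_comm t b) in L3. lia.
    + destruct (MU a2 b t a (tri_ab _ _ _ _ H2) (tri_ca _ _ _ _ H) ltac:(congruence)) as [[G1 G2]|[G1 G2]]; subst; try congruence.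
Qed.

Open Scope Z_scope.

Definition excl (e : option lpt) (a b t : lpt) : Prop :=
  match e with None => True | Some e0 => ~ (e0 = mid a b \/ e0 = mid b t \/ e0 = mid t a) end.

Inductive gnode (s : eset) (c : lpt) (e : option lpt) : lpt -> lpt -> Prop :=
| gn_root : forall a b t w, CHILD s c w a b t -> excl e a b t -> gnode s c e w c
| gn_step : forall y z a b t w, gnode s c e y z -> CHILD s y w a b t ->
    ~ (z = mid a b \/ z = mid b t \/ z = mid t a) -> gnode s c e w y.

Lemma mids_swap z a b c a' b' : ((a' = a /\ b' = b) \/ (a' = b /\ b' = a)) ->
  ~ (z = mid a b \/ z = mid b c \/ z = mid c a) -> ~ (z = mid a' b' \/ z = mid b' c \/ z = mid c a').
Proof.
  intros [[-> ->]|[-> ->]] N; auto.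
  rewrite (mid_comm b a), (mid_comm a c), (mid_comm c b). tauto.
Qed.

Lemma tnode_gnode s r y z : longest_everywhere s r -> tnode s r y z -> gnode s r None y z.
Proof.
  intros LE H. induction H as [a b c w H E Y|y z a b c w H1 IH H E N L1 L2 Y].
  - destruct (LE a b c H E) as [L1 L2].
    destruct (normalize s a b c r w H E L1 L2 Y) as [a' [b' [C _]]]. eapply gn_root; eauto. exact I.
  - destruct (normalize s a b c y w H E L1 L2 Y) as [a' [b' [C Sw]]].
    eapply gn_step; eauto. eapply mids_swap; eauto.
Qed.

Lemma Dec s c e w y : gnode s c e w y ->
  (y = c /\ exists a b t, CHILD s c w a b t /\ excl e a b t) \/
  (exists c' a b t, CHILD s c c' a b t /\ excl e a b t /\ gnode s c' (Some c) w y).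
Proof.
  intros H. induction H as [a b t w C X|y z a b t w H IH C N].
  - left. eauto 10.
  - right. destruct IH as [[-> [a0 [b0 [t0 [C0 X0]]]]]|[c' [a0 [b0 [t0 [C0 [X0 G]]]]]]].
    + exists y, a0, b0, t0. split; [auto|split; [auto|]]. eapply gn_root; eauto.
    + exists c', a0, b0, t0. split; [auto|split; [auto|]]. eapply gn_step; eauto.
Qed.

Lemma inbox_sym a b p : inbox a b p -> inbox b a p.
Proof. unfold inbox; lia. Qed.

Lemma R3_sym e1 e2 o p : R3 e1 e2 o p -> R3 e2 e1 o p.
Proof.
  unfold R3. intros [H1 H2]. split; [apply inbox_sym; auto|].
  rewrite (det3_sw e2 e1 p), (det3_sw e2 e1 o). nia.
Qed.

Lemma R3_end1 e1 e2 o : R3 e1 e2 o e1.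
Proof. unfold R3, inbox, det3. split; [lia|]. replace ((fst e2 - fst e1) * (snd e1 - snd e1) - (snd e2 - snd e1) * (fst e1 - fst e1)) with 0 by ring. lia. Qed.
Lemma R3_end2 e1 e2 o : R3 e1 e2 o e2.
Proof. unfold R3, inbox, det3. split; [lia|]. replace ((fst e2 - fst e1) * (snd e2 - snd e1) - (snd e2 - snd e1) * (fst e2 - fst e1)) with 0 by ring. lia. Qed.

Lemma KIR a b t o : Z.abs (det3 a b t) = 1 -> len a b > len b t -> len a b > len t a ->
  det3 a b o * det3 a b t < 0 -> forall p, R3 b t a p -> R3 a b o p.
Proof.
  intros H L1 L2 S p [P1 P2].
  pose proof (LQ a b t H L1 L2) as Hb.
  destruct (KIc a b t p H Hb P1 P2) as [Q1 Q2].
  split; auto.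
  generalize dependent (det3 a b t). generalize (det3 a b p) (det3 a b o). intros P O D HD S Q.
  assert (D = 1 \/ D = -1) as [->| ->] by lia; nia.
Qed.

Lemma RegL s c c' a0 b0 t0 : MUp s -> T2p s -> CHILD s c c' a0 b0 t0 ->
  forall w y, gnode s c' (Some c) w y ->
  exists a b t, CHILD s y w a b t /\ (forall p, R3 b t a p -> R3 b0 t0 a0 p) /\ len b t < len b0 t0.
Proof.
  intros MU T C0 w y G. induction G as [a b t w C X|y z a b t w G IH C N].
  - exists a, b, t. split; auto.
    destruct C0 as [H0 [E0 [M1 [M2 Y0]]]]. pose proof C as C'. destruct C as [H [E [L1 [L2 Y]]]].
    assert (Emid : mid b0 t0 = mid a b) by congruence.
    assert (Ha0 : tri_of s a b a0) by exact (align s b0 t0 a0 a b MU (tri_rot _ _ _ _ H0) (tri_ab _ _ _ _ H) Emid).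
    assert (Nt : t <> a0).
    { intro Q. subst t. apply X.
      destruct (MU b0 t0 a b (tri_bc _ _ _ _ H0) (tri_ab _ _ _ _ H) Emid) as [[F1 F2]|[F1 F2]]; subst a b.
      - right; right. subst. first [reflexivity | apply mid_comm].
      - right; left. subst. first [reflexivity | apply mid_comm]. }
    pose proof (T2sign s a b t a0 T H Ha0 Nt) as S.
    split.
    + intros p Hp. pose proof (KIR a b t a0 (tri_det _ _ _ _ H) L1 L2 ltac:(lia) p Hp) as K.
      destruct (MU b0 t0 a b (tri_bc _ _ _ _ H0) (tri_ab _ _ _ _ H) Emid) as [[F1 F2]|[F1 F2]]; subst a b; auto.
      apply R3_sym; auto.
    + assert (len a b = len b0 t0) by (apply (mid_len s); eauto using tri_ab, tri_bc). lia.
  - destruct IH as [a1 [b1 [t1 [C1 [R1 L]]]]].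
    exists a, b, t. split; auto.
    pose proof C1 as C1'. destruct C1 as [H1 [E1 [L11 [L12 Y1]]]].
    pose proof C as C'. destruct C as [H [E [L1 [L2 Y]]]].
    assert (Emid : mid b1 t1 = mid a b) by congruence.
    assert (Ha1 : tri_of s a b a1) by exact (align s b1 t1 a1 a b MU (tri_rot _ _ _ _ H1) (tri_ab _ _ _ _ H) Emid).
    assert (Nt : t <> a1).
    { intro Q. subst t. apply N.
      destruct (MU b1 t1 a b (tri_bc _ _ _ _ H1) (tri_ab _ _ _ _ H) Emid) as [[F1 F2]|[F1 F2]]; subst a b.
      - right; right. subst. first [reflexivity | apply mid_comm].
      - right; left. subst. first [reflexivity | apply mid_comm]. }
    pose proof (T2sign s a b t a1 T H Ha1 Nt) as S.
    split.
    + intros p Hp. apply R1. pose proof (KIR a b t a1 (tri_det _ _ _ _ H) L1 L2 ltac:(lia) p Hp) as K.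
      destruct (MU b1 t1 a b (tri_bc _ _ _ _ H1) (tri_ab _ _ _ _ H) Emid) as [[F1 F2]|[F1 F2]]; subst a b; auto.
      apply R3_sym; auto.
    + assert (len a b = len b1 t1) by (apply (mid_len s); eauto using tri_ab, tri_bc). lia.
Qed.

Open Scope Z_scope.

Lemma SideL s c c' a b t p : CHILD s c c' a b t -> R3 b t a p -> inbox a b p /\ det3 a b p * det3 a b t >= 0.
Proof.
  intros [H [E [L1 [L2 Y]]]] [P1 P2].
  apply (KIc a b t p (tri_det _ _ _ _ H) (LQ a b t (tri_det _ _ _ _ H) L1 L2) P1 P2).
Qed.

Lemma zero_of D1 D2 P : Z.abs D1 = 1 -> D1 * D2 < 0 -> P * D1 >= 0 -> P * D2 >= 0 -> P = 0.
Proof. intros H. assert (D1 = 1 \/ D1 = -1) as [->| ->] by lia; nia. Qed.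

Lemma seg_pts a b t p q : Z.abs (det3 a b t) = 1 -> inbox a b p -> inbox a b q -> det3 a b p = 0 -> det3 a b q = 0 ->
  p <> q -> len p q = len a b.
Proof.
  intros H Hp Hq Dp Dq N.
  destruct (B4 a b t p Hp Dp H) as [->| ->]; destruct (B4 a b t q Hq Dq H) as [->| ->]; try congruence.
  apply len_comm.
Qed.

Lemma Sib s c c1 a1 b1 t1 c2 a2 b2 t2 p q : MUp s -> T2p s ->
  CHILD s c c1 a1 b1 t1 -> CHILD s c c2 a2 b2 t2 -> c1 <> c2 -> p <> q ->
  R3 b1 t1 a1 p -> R3 b1 t1 a1 q -> R3 b2 t2 a2 p -> R3 b2 t2 a2 q -> len p q < len a1 b1 -> False.
Proof.
  intros MU T C1 C2 Nc Npq R1p R1q R2p R2q L.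
  pose proof C1 as C1'. pose proof C2 as C2'.
  destruct C1 as [H1 [E1 [L11 [L12 Y1]]]]. destruct C2 as [H2 [E2 [L21 [L22 Y2]]]].
  destruct (SideL _ _ _ _ _ _ p C1' R1p) as [B1p S1p].
  destruct (SideL _ _ _ _ _ _ q C1' R1q) as [B1q S1q].
  destruct (SideL _ _ _ _ _ _ p C2' R2p) as [B2p S2p].
  destruct (SideL _ _ _ _ _ _ q C2' R2q) as [B2q S2q].
  pose proof (tri_det _ _ _ _ H1) as D1.
  destruct (MU a1 b1 a2 b2 (tri_ab _ _ _ _ H1) (tri_ab _ _ _ _ H2) ltac:(congruence)) as [[F1 F2]|[F1 F2]]; subst a2 b2.
  - destruct (classic (t1 = t2)) as [Et|Et]; [subst; congruence|].
    pose proof (T2sign s a1 b1 t1 t2 T H1 H2 Et) as S.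
    pose proof (zero_of _ _ _ D1 S S1p S2p). pose proof (zero_of _ _ _ D1 S S1q S2q).
    pose proof (seg_pts a1 b1 t1 p q D1 B1p B1q H H0 Npq). lia.
  - destruct (classic (t1 = t2)) as [Et|Et].
    + subst t2. destruct R1p as [I1p _]. destruct R2p as [I2p _]. destruct R1q as [I1q _]. destruct R2q as [I2q _].
      pose proof (LQ a1 b1 t1 D1 L11 L12) as Hb.
      assert (p = t1) by (apply (B5 a1 b1 t1 p Hb I1p); apply inbox_sym; auto).
      assert (q = t1) by (apply (B5 a1 b1 t1 q Hb I1q); apply inbox_sym; auto).
      congruence.
    + pose proof (T2sign s a1 b1 t1 t2 T H1 (tri_sw _ _ _ _ H2) Et) as S.
      rewrite (det3_sw b1 a1 p), (det3_sw b1 a1 t2) in S2p.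
      rewrite (det3_sw b1 a1 q), (det3_sw b1 a1 t2) in S2q.
      assert (S2p' : det3 a1 b1 p * det3 a1 b1 t2 >= 0) by nia.
      assert (S2q' : det3 a1 b1 q * det3 a1 b1 t2 >= 0) by nia.
      pose proof (zero_of _ _ _ D1 S S1p S2p'). pose proof (zero_of _ _ _ D1 S S1q S2q').
      pose proof (seg_pts a1 b1 t1 p q D1 B1p B1q H H0 Npq). lia.
Qed.

Lemma R3_pair s b t a b' t' : MUp s -> inE s b t -> inE s b' t' -> mid b t = mid b' t' ->
  R3 b t a b' /\ R3 b t a t'.
Proof.
  intros MU H1 H2 E. destruct (MU b t b' t' H1 H2 E) as [[<- <-]|[<- <-]];
  auto using R3_end1, R3_end2.
Qed.

Lemma Mixed s c y a b t c' a' b' t' z2 : MUp s -> T2p s ->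
  CHILD s c y a b t -> CHILD s c c' a' b' t' -> gnode s c' (Some c) y z2 -> False.
Proof.
  intros MU T C1 C2 G.
  destruct (RegL s c c' a' b' t' MU T C2 y z2 G) as [a'' [b'' [t'' [C3 [Rg Lg]]]]].
  pose proof C1 as C1'. pose proof C2 as C2'. pose proof C3 as C3'.
  destruct C1 as [H1 [E1 [L11 [L12 Y1]]]]. destruct C2 as [H2 [E2 [L21 [L22 Y2]]]].
  destruct C3 as [H3 [E3 [L31 [L32 Y3]]]].
  destruct (classic (c' = y)) as [Ec|Ec].
  - assert (len b' t' = len b'' t'') by (apply (mid_len s); eauto using tri_bc; congruence). lia.
  - destruct (R3_pair s b t a b'' t'' MU (tri_bc _ _ _ _ H1) (tri_bc _ _ _ _ H3) ltac:(congruence)) as [P1 P2].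
    assert (len b t = len b'' t'') by (apply (mid_len s); eauto using tri_bc; congruence).
    destruct (tri_neq _ _ _ _ H3) as [_ [N _]].
    apply (Sib s c y a b t c' a' b' t' b'' t'' MU T C1' C2' (fun e => Ec (eq_sym e)) N P1 P2
      (Rg _ (R3_end1 _ _ _)) (Rg _ (R3_end2 _ _ _))). lia.
Qed.

Lemma TreeU s : MUp s -> T2p s -> forall n c e y z1 z2 ca cb,
  inE s ca cb -> mid ca cb = c -> (Z.to_nat (len ca cb) < n)%nat ->
  gnode s c e y z1 -> gnode s c e y z2 -> z1 = z2.
Proof.
  intros MU T n. induction n as [|n IH]; intros c e y z1 z2 ca cb Hc Ec Hn G1 G2; [lia|].
  destruct (Dec s c e y z1 G1) as [[-> [a1 [b1 [t1 [C1 X1]]]]]|[c1 [a1 [b1 [t1 [C1 [X1 G1']]]]]]];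
  destruct (Dec s c e y z2 G2) as [[-> [a2 [b2 [t2 [C2 X2]]]]]|[c2 [a2 [b2 [t2 [C2 [X2 G2']]]]]]].
  - reflexivity.
  - exfalso. eapply (Mixed s c y a1 b1 t1 c2 a2 b2 t2 z2); eauto.
  - exfalso. eapply (Mixed s c y a2 b2 t2 c1 a1 b1 t1 z1); eauto.
  - destruct (classic (c1 = c2)) as [Ec12|Ec12].
    + subst c2. pose proof C1 as C1'. destruct C1 as [H1 [E1 [L11 [L12 Y1]]]].
      assert (len a1 b1 = len ca cb) by (apply (mid_len s); eauto using tri_ab; congruence).
      apply (IH c1 (Some c) y z1 z2 b1 t1 (tri_bc _ _ _ _ H1) Y1); auto.
      assert (0 <= len b1 t1) by (unfold len; lia). lia.
    + exfalso.
      destruct (RegL s c c1 a1 b1 t1 MU T C1 y z1 G1') as [a3 [b3 [t3 [C3 [Rg3 Lg3]]]]].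
      destruct (RegL s c c2 a2 b2 t2 MU T C2 y z2 G2') as [a4 [b4 [t4 [C4 [Rg4 Lg4]]]]].
      pose proof C3 as C3'. pose proof C4 as C4'. pose proof C1 as C1'.
      destruct C3 as [H3 [E3 [L31 [L32 Y3]]]]. destruct C4 as [H4 [E4 [L41 [L42 Y4]]]].
      destruct C1 as [H1 [E1 [L11 [L12 Y1]]]].
      destruct (R3_pair s b4 t4 a4 b3 t3 MU (tri_bc _ _ _ _ H4) (tri_bc _ _ _ _ H3) ltac:(congruence)) as [P1 P2].
      destruct (tri_neq _ _ _ _ H3) as [_ [N _]].
      apply (Sib s c c1 a1 b1 t1 c2 a2 b2 t2 b3 t3 MU T C1' C2 Ec12 N
        (Rg3 _ (R3_end1 _ _ _)) (Rg3 _ (R3_end2 _ _ _)) (Rg4 _ P1) (Rg4 _ P2)). lia.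
Qed.

Lemma tnode_edge s r y z : tnode s r y z -> exists a b, inE s a b /\ mid a b = r.
Proof.
  intros H. induction H as [a b c w H E Y|]; auto. exists a, b. split; auto. exact (tri_ab _ _ _ _ H).
Qed.

Lemma TreeT s r y z1 z2 : MUp s -> T2p s -> longest_everywhere s r -> tnode s r y z1 -> tnode s r y z2 -> z1 = z2.
Proof.
  intros MU T LE H1 H2. destruct (tnode_edge _ _ _ _ H1) as [a [b [Hab E]]].
  apply (TreeU s MU T (S (Z.to_nat (len a b))) r None y z1 z2 a b Hab E); auto using tnode_gnode.
Qed.

Open Scope Z_scope.

Lemma notlong_child s a b c x : tri_of s a b c -> mid a b = x -> ~ (len a b > len b c /\ len a b > len c a) ->
  exists z b' t', CHILD s z x c b' t'.
Proof.
  intros H E N. destruct (LU a b c (tri_det _ _ _ _ H)) as [L|[[L1 L2]|[L1 L2]]]; [tauto| |].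
  - exists (mid c b), b, a. split; [apply tri_sw, tri_rot; auto|]. split; [auto|].
    rewrite (len_comm c b), (len_comm b a), (len_comm a c). split; [lia|]. split; [lia|].
    rewrite mid_comm; auto.
  - exists (mid c a), a, b. split; [apply tri_rot, tri_rot; auto|]. split; [auto|].
    split; [lia|]. split; [lia|]. auto.
Qed.

Lemma ParentInj s z x a1 b1 t1 a2 b2 t2 : MUp s -> CHILD s z x a1 b1 t1 -> CHILD s z x a2 b2 t2 -> a1 = a2.
Proof.
  intros MU [H1 [E1 [_ [_ Y1]]]] [H2 [E2 [_ [_ Y2]]]].
  destruct (tri_neq _ _ _ _ H2) as [D1 [D2 D3]].
  destruct (MU a1 b1 a2 b2 (tri_ab _ _ _ _ H1) (tri_ab _ _ _ _ H2) ltac:(congruence)) as [[F1 F2]|[F1 F2]]; auto.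
  subst a1 b1.
  destruct (MU a2 t1 b2 t2 (tri_bc _ _ _ _ H1) (tri_bc _ _ _ _ H2) ltac:(congruence)) as [[F1 F2]|[F1 F2]]; congruence.
Qed.

Lemma Exist s B x : MUp s -> T2p s -> (forall a b, inE s a b -> len a b <= B) -> Lambda s x ->
  exists r, tau_inv s x r.
Proof.
  intros MU T HB HL.
  destruct (classic (longest_everywhere s x)) as [LE|NLE].
  - exists x. split; [apply root_of; auto|left; auto].
  - destruct (notLE_child s x NLE) as [z [a [b [t C]]]].
    destruct (Climb s B MU T HB (S (Z.to_nat (B - len a b))) z x a b t ltac:(lia) C) as [r [R N]].
    exists r. split; auto. right. eauto.
Qed.

Lemma quad_rev a b c d : strictly_convex_quad a c b d -> strictly_convex_quad a d b c.
Proof.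
  unfold strictly_convex_quad.
  assert (E1 : det3 a d b = - det3 b d a) by (unfold det3; ring).
  assert (E2 : det3 d b c = - det3 c b d) by (unfold det3; ring).
  assert (E3 : det3 b c a = - det3 a c b) by (unfold det3; ring).
  assert (E4 : det3 c a d = - det3 d a c) by (unfold det3; ring).
  rewrite E1, E2, E3, E4. lia.
Qed.

Theorem Part2 (xi s : eset) (x : lpt) : MUp s -> T2p s -> BNDp s -> Lambda s x ->
  (card1 (tau_inv s x) \/ card2 (tau_inv s x)) /\
  (forall y1 y2, y1 <> y2 ->
     (forall z, tau_inv s x z <-> z = y1 \/ z = y2) ->
     is_leaf s y1 x /\ is_leaf s y2 x) /\
  (Finc xi s x -> card2 (tau_inv s x)) /\
  ((exists a b c, tri_of s a b c /\ mid a b = x /\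
      (len a b > len b c)%Z /\ (len a b > len c a)%Z) ->
   card1 (tau_inv s x)).
Proof.
  intros MU T [B HB] HL.
  destruct (Exist s B x MU T HB HL) as [r1 Hr1].
  split; [|split; [|split]].
  - destruct (classic (forall r, tau_inv s x r -> r = r1)) as [A|A].
    + left. exists r1. intro z. split; auto. intros ->; auto.
    + right. apply not_all_ex_not in A as [r2 A]. apply imply_to_and in A as [Hr2 N].
      exists r1, r2. split; [auto|]. intro z. split; [|intros [->| ->]; auto].
      intro Hz. destruct (Cnt3 s x r1 r2 z MU T Hr1 Hr2 Hz) as [?|[?|?]]; auto. congruence.
  -
    intros y1 y2 Ny E.
    assert (H1 : tau_inv s x y1) by (apply E; auto).
    assert (H2 : tau_inv s x y2) by (apply E; auto).
    assert (Key : forall u v, u <> v -> tau_inv s x u -> tau_inv s x v -> is_leaf s u x).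
    { intros u v Nuv [Ru Iu] [Rv Iv]. split; auto. intros [w Hw].
      destruct (classic (x = u)) as [Xu|Xu]. { apply Nuv. symmetry. eapply rootx; eauto. }
      destruct (classic (x = v)) as [Xv|Xv]. { apply Nuv. eapply rootx; eauto. }
      destruct (in_tau_cases s u x Ru Iu) as [?|[z1 [a1 [b1 [t1 [N1 C1]]]]]]; [congruence|].
      destruct (in_tau_cases s v x Rv Iv) as [?|[z2 [a2 [b2 [t2 [N2 C2]]]]]]; [congruence|].
      inversion Hw as [a b c w' Ht Em Y|y' z' a b c w' H1' Ht Em Nm L1 L2 Y]; subst.
      + congruence.
      + assert (a1 = a2) by (eapply (pigL s a b c); eauto). subst a2.
        assert (z1 = z2) by (eapply ParentDet; eauto). subst z2.
        apply Nuv. apply (P s u _ z1 MU T (root_LE _ _ Ru) N1 v (root_LE _ _ Rv) N2). }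
    split; [apply (Key y1 y2)|apply (Key y2 y1)]; auto.
  -
    intros [a [b [c [d [Hab [Em [Nx [Hc [Hd [Ncd [Q L]]]]]]]]]]].
    pose proof (B6 a b c d (tri_det _ _ _ _ Hc) (tri_det _ _ _ _ Hd) Q L) as N1.
    pose proof (B6 a b d c (tri_det _ _ _ _ Hd) (tri_det _ _ _ _ Hc) (quad_rev _ _ _ _ Q) ltac:(rewrite len_comm; lia)) as N2.
    destruct (notlong_child s a b c x Hc Em N1) as [z1 [b1 [t1 C1]]].
    destruct (notlong_child s a b d x Hd Em N2) as [z2 [b2 [t2 C2]]].
    pose proof C1 as C1'. pose proof C2 as C2'.
    destruct C1' as [H1 _]. destruct C2' as [H2 _].
    destruct (Climb s B MU T HB (S (Z.to_nat (B - len c b1))) z1 x c b1 t1 ltac:(pose proof (HB _ _ (tri_ab _ _ _ _ H1)); lia) C1) as [q1 [R1 T1]].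
    destruct (Climb s B MU T HB (S (Z.to_nat (B - len d b2))) z2 x d b2 t2 ltac:(pose proof (HB _ _ (tri_ab _ _ _ _ H2)); lia) C2) as [q2 [R2 T2]].
    assert (Nq : q1 <> q2).
    { intros <-. assert (z1 = z2) by (eapply TreeT; eauto using root_LE). subst z2.
      apply Ncd. eapply ParentInj; eauto. }
    assert (I1 : tau_inv s x q1) by (split; auto; right; eauto).
    assert (I2 : tau_inv s x q2) by (split; auto; right; eauto).
    exists q1, q2. split; auto. intro z. split; [|intros [->| ->]; auto].
    intro Hz. destruct (Cnt3 s x q1 q2 z MU T I1 I2 Hz) as [?|[?|?]]; auto. congruence.
  -
    intros [a [b [c [Ht [Em [L1 L2]]]]]].
    exists r1. intro r. split; [|intros ->; auto].
    intros Hr. destruct Hr1 as [R1 I1]. destruct Hr as [R I].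
    destruct (classic (x = r1)) as [X1|X1]. { eapply rootx; eauto. }
    destruct (classic (x = r)) as [X2|X2]. { symmetry. eapply rootx; eauto. }
    destruct (in_tau_cases s r1 x R1 I1) as [?|[z1 [a1 [b1 [t1 [N1 C1]]]]]]; [congruence|].
    destruct (in_tau_cases s r x R I) as [?|[z2 [a2 [b2 [t2 [N2 C2]]]]]]; [congruence|].
    assert (a1 = a2) by (eapply (pigL s a b c); eauto). subst a2.
    assert (z1 = z2) by (eapply ParentDet; eauto). subst z2.
    symmetry. eapply P; eauto using root_LE.
Qed.

Close Scope Z_scope.

Lemma MU_of s : pairwise_disjoint s -> MUp s.
Proof.
  intros PD a b a' b' H1 H2 E. destruct (classic (same_edge a b a' b')) as [S|N]; auto.
  exfalso. apply (PD a b a' b' H1 H2 N).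
  exists ((IZR (fst a) + IZR (fst b)) / 2, (IZR (snd a) + IZR (snd b)) / 2)%R.
  unfold mid in E. injection E as E0 E1.
  apply (f_equal IZR) in E0. apply (f_equal IZR) in E1. rewrite !plus_IZR in E0, E1.
  split; exists (/2)%R; split; try lra; unfold toR; simpl; f_equal; lra.
Qed.

Lemma cross_ident (u0 u1 w0 w1 : Z) : (u0*w1 - u1*w0 = 0)%Z ->
  ((u0*u0+u1*u1)*w0 = (u0*w0+u1*w1)*u0 /\ (u0*u0+u1*u1)*w1 = (u0*w0+u1*w1)*u1)%Z.
Proof.
  intros H. split.
  - assert ((u0*u0+u1*u1)*w0 - (u0*w0+u1*w1)*u0 = - u1 * (u0*w1 - u1*w0))%Z by ring. rewrite H in H0. lia.
  - assert ((u0*u0+u1*u1)*w1 - (u0*w0+u1*w1)*u1 = u0 * (u0*w1 - u1*w0))%Z by ring. rewrite H in H0. lia.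
Qed.

Open Scope R_scope.
(* crossing point of segments p-d and q-c, with N (d - c) = M (q - p) *)
Lemma cross_pt (P0 P1 Q0 Q1 C0 C1 D0 D1 N M : R) : N > 0 -> M > 0 ->
  N * (D0 - C0) = M * (Q0 - P0) -> N * (D1 - C1) = M * (Q1 - P1) ->
  let h := N / (N + M) in
  (0 < h < 1) /\ P0 + h * (D0 - P0) = Q0 + h * (C0 - Q0) /\ P1 + h * (D1 - P1) = Q1 + h * (C1 - Q1).
Proof.
  intros HN HM E0 E1 h. subst h.
  assert (Hi : (N + M) * / (N + M) = 1) by (field; lra).
  assert (Hp : 0 < / (N + M)) by (apply Rinv_0_lt_compat; lra).
  unfold Rdiv.
  split; [split; nra|split].
  - assert (K : P0 + N * / (N + M) * (D0 - P0) - (Q0 + N * / (N + M) * (C0 - Q0)) = ((P0-Q0)*M + N*(D0 - C0)) * / (N+M)) by (field; lra).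
    rewrite E0 in K. replace ((P0 - Q0) * M + M * (Q0 - P0)) with 0 in K by ring. lra.
  - assert (K : P1 + N * / (N + M) * (D1 - P1) - (Q1 + N * / (N + M) * (C1 - Q1)) = ((P1-Q1)*M + N*(D1 - C1)) * / (N+M)) by (field; lra).
    rewrite E1 in K. replace ((P1 - Q1) * M + M * (Q1 - P1)) with 0 in K by ring. lra.
Qed.

Lemma T2_of s : pairwise_disjoint s -> T2p s.
Proof.
  intros PD p q c d Hc Hd E. destruct (classic (c = d)) as [|N]; auto. exfalso.
  destruct (tri_neq _ _ _ _ Hc) as [Npq [_ Ncp]]. destruct (tri_neq _ _ _ _ Hd) as [_ [_ Ndp]].
  destruct p as [p0 p1], q as [q0 q1], c as [c0 c1], d as [d0 d1].
  unfold det3 in E; simpl in E.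
  set (u0 := (q0 - p0)%Z). set (u1 := (q1 - p1)%Z). set (w0 := (d0 - c0)%Z). set (w1 := (d1 - c1)%Z).
  assert (Dz : (u0*w1 - u1*w0 = 0)%Z) by (subst u0 u1 w0 w1; lia).
  destruct (cross_ident u0 u1 w0 w1 Dz) as [I0 I1].
  set (Nz := (u0*u0+u1*u1)%Z) in *. set (Mz := (u0*w0+u1*w1)%Z) in *.
  assert (HN : (Nz > 0)%Z).
  { subst Nz. assert (u0 <> 0 \/ u1 <> 0)%Z.
    { destruct (Z.eq_dec u0 0); destruct (Z.eq_dec u1 0); auto. exfalso. apply Npq. subst u0 u1. f_equal; lia. }
    nia. }
  apply (f_equal IZR) in I0. apply (f_equal IZR) in I1. rewrite !mult_IZR in I0, I1.
  subst u0 u1 w0 w1. rewrite !minus_IZR in I0, I1.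
  destruct (Z.lt_trichotomy Mz 0) as [HM|[HM|HM]].
  -
    assert (HM' : (IZR (- Mz) > 0)%R) by (apply IZR_lt; lia). rewrite opp_IZR in HM'.
    assert (HN' : (IZR Nz > 0)%R) by (apply IZR_lt; lia).
    destruct (cross_pt (IZR p0) (IZR p1) (IZR q0) (IZR q1) (IZR d0) (IZR d1) (IZR c0) (IZR c1) (IZR Nz) (- IZR Mz) HN' HM' ltac:(lra) ltac:(lra)) as [Hh [X0 X1]].
    apply (PD (p0,p1) (c0,c1) (q0,q1) (d0,d1)).
    + apply inE_sym. exact (tri_ca _ _ _ _ Hc).
    + exact (tri_bc _ _ _ _ Hd).
    + unfold same_edge. intros [[? ?]|[? ?]]; congruence.
    + eexists. split; exists (IZR Nz / (IZR Nz + - IZR Mz)); split; eauto; unfold toR; simpl; f_equal; eauto.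
  - rewrite HM in I0, I1. simpl in I0, I1.
    assert (IZR Nz <> 0)%R by (apply not_0_IZR; lia).
    assert (d0 = c0 /\ d1 = c1) as [? ?].
    { split; apply eq_IZR; nra. }
    subst; congruence.
  - assert (HM' : (IZR Mz > 0)%R) by (apply IZR_lt; lia).
    assert (HN' : (IZR Nz > 0)%R) by (apply IZR_lt; lia).
    destruct (cross_pt (IZR p0) (IZR p1) (IZR q0) (IZR q1) (IZR c0) (IZR c1) (IZR d0) (IZR d1) (IZR Nz) (IZR Mz) HN' HM' ltac:(lra) ltac:(lra)) as [Hh [X0 X1]].
    apply (PD (p0,p1) (d0,d1) (q0,q1) (c0,c1)).
    + apply inE_sym. exact (tri_ca _ _ _ _ Hd).
    + exact (tri_bc _ _ _ _ Hc).
    + unfold same_edge. intros [[? ?]|[? ?]]; congruence.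
    + eexists. split; exists (IZR Nz / (IZR Nz + IZR Mz)); split; eauto; unfold toR; simpl; f_equal; eauto.
Qed.

Close Scope R_scope.

Lemma telescope (g : nat -> bool) (m : nat) :
  Nat.odd (length (filter (fun i => xorb (g i) (g (S i))) (seq 0 m))) = xorb (g 0%nat) (g m).
Proof.
  induction m as [|m IH].
  - simpl. destruct (g 0%nat); reflexivity.
  - rewrite seq_S, filter_app, length_app. simpl.
    destruct (xorb (g m) (g (S m))) eqn:E; simpl.
    + rewrite Nat.add_1_r, Nat.odd_succ, <- Nat.negb_odd, IH.
      destruct (g 0%nat), (g m), (g (S m)); simpl in *; congruence.
    + rewrite Nat.add_0_r, IH. destruct (g 0%nat), (g m), (g (S m)); simpl in *; congruence.
Qed.

Lemma parity (g : nat -> bool) (n : nat) : (1 <= n)%nat ->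
  Nat.odd (length (filter (fun i => xorb (g i) (g ((i + 1) mod n))) (seq 0 n))) = false.
Proof.
  intros Hn. destruct n as [|m]; [lia|].
  rewrite seq_S, filter_app, length_app. simpl ((0 + m)%nat).
  rewrite (filter_ext_in _ (fun i => xorb (g i) (g (S i)))).
  2:{ intros i Hi. apply in_seq in Hi. rewrite Nat.mod_small by lia. rewrite Nat.add_1_r. reflexivity. }
  assert (E0 : ((m + 1) mod S m)%nat = 0%nat) by (rewrite Nat.add_1_r, Nat.Div0.mod_same; reflexivity).
  cbn [filter]. rewrite E0. destruct (xorb (g m) (g 0%nat)) eqn:E; simpl.
  - rewrite Nat.add_1_r, Nat.odd_succ, <- Nat.negb_odd, telescope.
    destruct (g 0%nat), (g m); simpl in *; congruence.
  - rewrite Nat.add_0_r, telescope. destruct (g 0%nat), (g m); simpl in *; congruence.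
Qed.

Definition Mv (vs : list lpt) : Z :=
  fold_right (fun p m => Z.max m (Z.max (Z.abs (fst p)) (Z.abs (snd p)))) 0%Z vs.

Lemma Mv_nonneg vs : (0 <= Mv vs)%Z.
Proof. induction vs; simpl; lia. Qed.

Lemma Mv_in vs p : In p vs -> (Z.abs (fst p) <= Mv vs /\ Z.abs (snd p) <= Mv vs)%Z.
Proof. induction vs as [|a vs IH]; simpl; [tauto|]. intros [->|H]; [lia|]. specialize (IH H). lia. Qed.

Lemma vb vs i : (Z.abs (fst (vertex vs i)) <= Mv vs /\ Z.abs (snd (vertex vs i)) <= Mv vs)%Z.
Proof.
  unfold vertex. destruct (Nat.lt_ge_cases i (length vs)).
  - apply Mv_in, nth_In; auto.
  - rewrite nth_overflow by auto. simpl. pose proof (Mv_nonneg vs). lia.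
Qed.

Lemma vbR vs i : (- IZR (Mv vs) <= IZR (fst (vertex vs i)) <= IZR (Mv vs) /\
                  - IZR (Mv vs) <= IZR (snd (vertex vs i)) <= IZR (Mv vs))%R.
Proof.
  destruct (vb vs i) as [H1 H2]. rewrite <- opp_IZR.
  repeat split; apply IZR_le; lia.
Qed.

Open Scope R_scope.

Lemma Rltb_neg a b : Rltb a b = negb (Rleb b a).
Proof. unfold Rltb, Rleb. destruct (Rlt_dec a b); destruct (Rle_dec b a); simpl; auto; lra. Qed.

Lemma Rleb_true a b : Rleb a b = true <-> a <= b.
Proof. unfold Rleb. destruct (Rle_dec a b); split; auto; discriminate. Qed.
Lemma Rltb_true a b : Rltb a b = true <-> a < b.
Proof. unfold Rltb. destruct (Rlt_dec a b); split; auto; discriminate. Qed.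

Lemma ix_bound (M ax ay bx by_ zy : R) : -M <= ax <= M -> -M <= bx <= M ->
  ((ay <= zy < by_) \/ (by_ <= zy < ay)) ->
  -M <= ax + (zy - ay) * (bx - ax) / (by_ - ay) <= M.
Proof.
  intros Ha Hb Hy.
  assert (Hd : by_ - ay <> 0) by lra.
  set (s := (zy - ay) / (by_ - ay)).
  assert (Es : s * (by_ - ay) = zy - ay) by (subst s; field; auto).
  assert (Hs : 0 <= s <= 1) by (destruct Hy; split; nra).
  replace ((zy - ay) * (bx - ax) / (by_ - ay)) with (s * (bx - ax)) by (subst s; field; auto).
  split; nra.
Qed.

Lemma crossb_far (ax ay bx by_ zx zy M : R) : -M <= ax <= M -> -M <= bx <= M -> zx < -M ->
  crossb (ax, ay) (bx, by_) (zx, zy) = xorb (Rleb ay zy) (Rleb by_ zy).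
Proof.
  intros Ha Hb Hz. unfold crossb. rewrite (Rltb_neg zy by_), (Rltb_neg zy ay).
  destruct (Rleb ay zy) eqn:E1; destruct (Rleb by_ zy) eqn:E2; simpl; auto.
  - apply Rltb_true. apply Rleb_true in E1.
    unfold Rleb in E2. destruct (Rle_dec by_ zy) as [|NN]; [discriminate|]. apply Rnot_le_lt in NN.
    pose proof (ix_bound M ax ay bx by_ zy Ha Hb (or_introl (conj E1 NN))). lra.
  - apply Rltb_true. apply Rleb_true in E2.
    unfold Rleb in E1. destruct (Rle_dec ay zy) as [|NN]; [discriminate|]. apply Rnot_le_lt in NN.
    pose proof (ix_bound M ax ay bx by_ zy Ha Hb (or_intror (conj E2 NN))). lra.
Qed.

Lemma crossb_some (ax ay bx by_ zx zy M : R) : -M <= ax <= M -> -M <= bx <= M ->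
  crossb (ax, ay) (bx, by_) (zx, zy) = true -> zx < M /\ ((ay <= zy < by_) \/ (by_ <= zy < ay)).
Proof.
  intros Ha Hb. unfold crossb. intro H.
  apply andb_prop in H as [H1 H2]. apply Rltb_true in H2.
  assert (Hy : (ay <= zy < by_) \/ (by_ <= zy < ay)).
  { apply orb_prop in H1 as [H1|H1]; apply andb_prop in H1 as [P Q];
    apply Rleb_true in P; apply Rltb_true in Q; [left|right]; lra. }
  split; auto. pose proof (ix_bound M ax ay bx by_ zy Ha Hb Hy). lra.
Qed.

Lemma L0_bound vs r : (1 <= length vs)%nat -> Lambda0 vs r ->
  (- Mv vs <= fst r <= Mv vs /\ - Mv vs <= snd r <= Mv vs)%Z.
Proof.
  intros Hn. destruct r as [r0 r1]. unfold Lambda0, in_polygon, toR. simpl.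
  intros [[i [Hi Hs]]|Ho].
  - unfold side_seg, on_closed_seg, toR in Hs. simpl in Hs.
    destruct Hs as [t [Ht E]]. injection E as E0 E1.
    destruct (vbR vs i) as [A0 A1]. destruct (vbR vs (nxt vs i)) as [B0 B1].
    assert (K0 : - IZR (Mv vs) <= IZR r0 <= IZR (Mv vs)) by (rewrite E0; split; nra).
    assert (K1 : - IZR (Mv vs) <= IZR r1 <= IZR (Mv vs)) by (rewrite E1; split; nra).
    rewrite <- opp_IZR in K0, K1. destruct K0 as [K0 K0']. destruct K1 as [K1 K1'].
    apply le_IZR in K0. apply le_IZR in K0'. apply le_IZR in K1. apply le_IZR in K1'. lia.
  - unfold crossing_number in Ho.
    set (l := filter _ _) in Ho.
    assert (Hne : exists i, In i l).
    { destruct l as [|i l']; [simpl in Ho; discriminate|]. exists i; simpl; auto. }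
    destruct Hne as [i Hi]. subst l. apply filter_In in Hi as [_ Hc].
    unfold toR in Hc.
    destruct (vbR vs i) as [A0 A1]. destruct (vbR vs (nxt vs i)) as [B0 B1].
    destruct (crossb_some _ _ _ _ _ _ _ A0 B0 Hc) as [U Y].
    assert (K1 : - IZR (Mv vs) <= IZR r1 <= IZR (Mv vs)) by (destruct Y; lra).
    assert (K0 : - IZR (Mv vs) <= IZR r0).
    { destruct (Rle_dec (- IZR (Mv vs)) (IZR r0)) as [|NN]; auto. apply Rnot_le_lt in NN. exfalso.
      rewrite (filter_ext_in _ (fun i => xorb (Rleb (IZR (snd (vertex vs i))) (IZR r1)) (Rleb (IZR (snd (vertex vs (nxt vs i)))) (IZR r1)))) in Ho.
      - unfold nxt in Ho. pose proof (parity (fun i => Rleb (IZR (snd (vertex vs i))) (IZR r1)) (length vs) Hn) as PP.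
        cbv beta in PP. rewrite PP in Ho. discriminate.
      - intros j _. destruct (vbR vs j) as [C0 _]. destruct (vbR vs (nxt vs j)) as [D0 _].
        apply (crossb_far _ _ _ _ _ _ _ C0 D0 NN). }
    rewrite <- opp_IZR in K0, K1. destruct K1 as [K1 K1'].
    apply le_IZR in K0. apply le_IZR in K1. apply le_IZR in K1'. apply lt_IZR in U. lia.
Qed.


Close Scope R_scope.

Lemma Part1 (vs : list lpt) (xi sigma : eset) :
  lattice_polygon vs -> Omega vs xi sigma -> MUp sigma /\ T2p sigma /\ BNDp sigma.
Proof.
  intros [[Hn _] _] [[HE [PD _]] _].
  split; [apply MU_of; auto|split; [apply T2_of; auto|]].
  exists (4 * Mv vs)%Z. intros a b H.
  destruct (HE a b H) as [_ [La [Lb _]]].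
  pose proof (L0_bound vs a ltac:(lia) La). pose proof (L0_bound vs b ltac:(lia) Lb).
  unfold len. destruct a, b; cbn [fst snd] in *. pose proof (Mv_nonneg vs). lia.
Qed.

Theorem mainTheorem3 (vs : list lpt) (xi sigma : eset) (x : lpt) :
  lattice_polygon vs ->
  boundary_condition vs xi ->
  Omega vs xi sigma ->
  Lambda sigma x ->
  (card1 (tau_inv sigma x) \/ card2 (tau_inv sigma x)) /\
  (forall y1 y2, y1 <> y2 ->
     (forall z, tau_inv sigma x z <-> z = y1 \/ z = y2) ->
     is_leaf sigma y1 x /\ is_leaf sigma y2 x) /\
  (Finc xi sigma x -> card2 (tau_inv sigma x)) /\
  ((exists a b c, tri_of sigma a b c /\ mid a b = x /\
      (len a b > len b c)%Z /\ (len a b > len c a)%Z) ->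
   card1 (tau_inv sigma x)).
Proof.
  intros HP _ HO HL.
  destruct (Part1 vs xi sigma HP HO) as [MU [T B]].
  exact (Part2 xi sigma x MU T B HL).
Qed.
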